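(* Given two trees $T$ and $T'$, there exists a tree $T''$ whose subdivision is a refinement of the subdivisions of both $T$ and $T'$ (every endpoint of a leaf interval of $T$ or of $T'$ is an endpoint of a leaf interval of $T''$).
   Context: Let $\tau=(\sqrt5-1)/2$, so $\tau^2+\tau=1$. A tree is a finite rooted binary tree whose carets (non-leaf vertex with its two children) are each labelled $x$-type or $y$-type. Vertices correspond to subintervals of $[0,1]$: the root to $[0,1]$; if a vertex corresponds to $[p,p+\tau^k]$, an $x$-type caret there gives children $[p,p+\tau^{k+2}]$ (left) and $[p+\tau^{k+2},p+\tau^k]$ (right), and a $y$-type caret gives $[p,p+\tau^{k+1}]$ (left) and $[p+\tau^{k+1},p+\tau^k]$ (right). The subdivision of a tree is the decomposition of $[0,1]$ into the intervals of its leaves. *)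

(* Defs.v *)
From Stdlib Require Import Reals List.
Open Scope R_scope.

(* tau = (sqrt 5 - 1)/2, so tau^2 + tau = 1 *)
Definition tau : R := (sqrt 5 - 1) / 2.

Inductive tree : Type :=
| Leaf : tree
| NodeX : tree -> tree -> tree
| NodeY : tree -> tree -> tree.

(* An interval [p, p + tau^k] is encoded by the pair (p, k). *)
Definition interval := (R * nat)%type.

Fixpoint leaf_intervals (t : tree) (p : R) (k : nat) : list interval :=
  match t with
  | Leaf => (p, k) :: nil
  | NodeX l r =>
      (* children [p, p+tau^(k+2)] and [p+tau^(k+2), p+tau^k] (length tau^(k+1)) *)
      leaf_intervals l p (k + 2) ++ leaf_intervals r (p + tau ^ (k + 2)) (k + 1)
  | NodeY l r =>
      (* children [p, p+tau^(k+1)] and [p+tau^(k+1), p+tau^k] (length tau^(k+2)) *)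
      leaf_intervals l p (k + 1) ++ leaf_intervals r (p + tau ^ (k + 1)) (k + 2)
  end.

Definition subdivision (t : tree) : list interval := leaf_intervals t 0 0.

Definition is_endpoint (t : tree) (x : R) : Prop :=
  exists p k, In (p, k) (subdivision t) /\ (x = p \/ x = p + tau ^ k).

Definition refines (t'' t : tree) : Prop :=
  forall x, is_endpoint t x -> is_endpoint t'' x.

(* Main.v *)
Require Import Defs.
From Stdlib Require Import Reals List Lra Lia.
Open Scope R_scope.

Definition Ep (t : tree) (p : R) (k : nat) (x : R) : Prop :=
  exists q j, In (q, j) (leaf_intervals t p k) /\ (x = q \/ x = q + tau ^ j).

Definition Rf (u t : tree) : Prop := forall p k x, Ep t p k x -> Ep u p k x.

Lemma tau_eq : tau ^ 2 + tau = 1.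
Proof.
  unfold tau. assert (H : sqrt 5 * sqrt 5 = 5) by (apply sqrt_sqrt; lra).
  simpl. nra.
Qed.

Lemma tau_pow k : tau ^ (k + 2) + tau ^ (k + 1) = tau ^ k.
Proof.
  rewrite !pow_add. rewrite <- Rmult_plus_distr_l.
  replace (tau ^ 2 + tau ^ 1) with 1 by (pose proof tau_eq; simpl in *; lra).
  ring.
Qed.

Lemma Ep_app_l l1 l2 t p k x : leaf_intervals t p k = l1 ++ l2 ->
  (exists q j, In (q, j) l1 /\ (x = q \/ x = q + tau ^ j)) -> Ep t p k x.
Proof.
  intros H [q [j [Hi Hx]]]. exists q, j. rewrite H. split; auto. apply in_or_app; auto.
Qed.

Lemma Ep_app_r l1 l2 t p k x : leaf_intervals t p k = l1 ++ l2 ->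
  (exists q j, In (q, j) l2 /\ (x = q \/ x = q + tau ^ j)) -> Ep t p k x.
Proof.
  intros H [q [j [Hi Hx]]]. exists q, j. rewrite H. split; auto. apply in_or_app; auto.
Qed.

Lemma ends t : forall p k, Ep t p k p /\ Ep t p k (p + tau ^ k).
Proof.
  induction t as [|l IHl r IHr|l IHl r IHr]; intros p k.
  - split; exists p, k; simpl; auto.
  - split.
    + eapply Ep_app_l; [reflexivity|]. apply (IHl p (k+2)%nat).
    + eapply Ep_app_r; [reflexivity|].
      destruct (IHr (p + tau ^ (k+2)) (k+1)%nat) as [_ H].
      replace (p + tau ^ k) with (p + tau ^ (k + 2) + tau ^ (k + 1))
        by (pose proof (tau_pow k); lra). exact H.
  - split.
    + eapply Ep_app_l; [reflexivity|]. apply (IHl p (k+1)%nat).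
    + eapply Ep_app_r; [reflexivity|].
      destruct (IHr (p + tau ^ (k+1)) (k+2)%nat) as [_ H].
      replace (p + tau ^ k) with (p + tau ^ (k + 1) + tau ^ (k + 2))
        by (pose proof (tau_pow k); lra). exact H.
Qed.

Lemma Rf_leaf u : Rf u Leaf.
Proof.
  intros p k x [q [j [Hi Hx]]]. simpl in Hi. destruct Hi as [Hi|[]].
  inversion Hi; subst. destruct Hx; subst; apply ends.
Qed.

Lemma Rf_refl t : Rf t t.
Proof. intros p k x H; exact H. Qed.

Lemma Rf_trans a b c : Rf a b -> Rf b c -> Rf a c.
Proof. unfold Rf; eauto. Qed.

Lemma split_app (l1 l2 : list interval) x :
  (exists q j, In (q, j) (l1 ++ l2) /\ (x = q \/ x = q + tau ^ j)) ->
  (exists q j, In (q, j) l1 /\ (x = q \/ x = q + tau ^ j)) \/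
  (exists q j, In (q, j) l2 /\ (x = q \/ x = q + tau ^ j)).
Proof.
  intros [q [j [Hi Hx]]]. apply in_app_or in Hi. destruct Hi; [left|right]; eauto.
Qed.

Lemma Rf_X a b l r : Rf a l -> Rf b r -> Rf (NodeX a b) (NodeX l r).
Proof.
  intros H1 H2 p k x H. apply split_app in H. destruct H as [H|H].
  - eapply Ep_app_l; [reflexivity|]. apply H1. exact H.
  - eapply Ep_app_r; [reflexivity|]. apply H2. exact H.
Qed.

Lemma Rf_Y a b l r : Rf a l -> Rf b r -> Rf (NodeY a b) (NodeY l r).
Proof.
  intros H1 H2 p k x H. apply split_app in H. destruct H as [H|H].
  - eapply Ep_app_l; [reflexivity|]. apply H1. exact H.
  - eapply Ep_app_r; [reflexivity|]. apply H2. exact H.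
Qed.

Lemma rot A B C p k :
  leaf_intervals (NodeY (NodeY A B) C) p k = leaf_intervals (NodeX A (NodeX B C)) p k.
Proof.
  simpl. rewrite <- app_assoc.
  replace (k + 1 + 1)%nat with (k + 2)%nat by lia.
  replace (k + 1 + 2)%nat with (k + 2 + 1)%nat by lia.
  replace (k + 1 + 1)%nat with (k + 2)%nat by lia.
  replace (p + tau ^ (k + 2) + tau ^ (k + 2 + 1)) with (p + tau ^ (k + 1)).
  - reflexivity.
  - rewrite <- (tau_pow (k+1)).
    replace (k + 1 + 2)%nat with (k + 2 + 1)%nat by lia.
    replace (k + 1 + 1)%nat with (k + 2)%nat by lia. ring.
Qed.

Lemma rot1 A B C : Rf (NodeY (NodeY A B) C) (NodeX A (NodeX B C)).
Proof. intros p k x H. unfold Ep in *. rewrite rot. exact H. Qed.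

Lemma rot2 A B C : Rf (NodeX A (NodeX B C)) (NodeY (NodeY A B) C).
Proof. intros p k x H. unfold Ep in *. rewrite <- rot. exact H. Qed.

Lemma forms t : (exists A B, Rf (NodeY A B) t) /\ (exists A B, Rf (NodeX A B) t).
Proof.
  induction t as [|l IHl r IHr|l IHl r IHr].
  - split; exists Leaf, Leaf; apply Rf_leaf.
  - split.
    + destruct IHr as [_ [B [C H]]]. exists (NodeY l B), C.
      eapply Rf_trans; [apply rot1|]. apply Rf_X; [apply Rf_refl|exact H].
    + exists l, r; apply Rf_refl.
  - split.
    + exists l, r; apply Rf_refl.
    + destruct IHl as [[A [B H]] _]. exists A, (NodeX B r).
      eapply Rf_trans; [apply rot2|]. apply Rf_Y; [exact H|apply Rf_refl].
Qed.

Lemma common t : forall s, exists u, Rf u t /\ Rf u s.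
Proof.
  induction t as [|l IHl r IHr|l IHl r IHr]; intros s.
  - exists s. split; [apply Rf_leaf|apply Rf_refl].
  - destruct s as [|l' r'|l' r'].
    + exists (NodeX l r). split; [apply Rf_refl|apply Rf_leaf].
    + destruct (IHl l') as [a [Ha1 Ha2]]. destruct (IHr r') as [b [Hb1 Hb2]].
      exists (NodeX a b). split; apply Rf_X; auto.
    + destruct (forms l') as [[A [B H]] _].
      destruct (IHl A) as [a [Ha1 Ha2]]. destruct (IHr (NodeX B r')) as [b [Hb1 Hb2]].
      exists (NodeX a b). split; [apply Rf_X; auto|].
      eapply Rf_trans; [apply (Rf_X a b A (NodeX B r')); auto|].
      eapply Rf_trans; [apply rot2|]. apply Rf_Y; [exact H|apply Rf_refl].
  - destruct s as [|l' r'|l' r'].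
    + exists (NodeY l r). split; [apply Rf_refl|apply Rf_leaf].
    + destruct (forms r') as [_ [B [C H]]].
      destruct (IHl (NodeY l' B)) as [a [Ha1 Ha2]]. destruct (IHr C) as [b [Hb1 Hb2]].
      exists (NodeY a b). split; [apply Rf_Y; auto|].
      eapply Rf_trans; [apply (Rf_Y a b (NodeY l' B) C); auto|].
      eapply Rf_trans; [apply rot1|]. apply Rf_X; [apply Rf_refl|exact H].
    + destruct (IHl l') as [a [Ha1 Ha2]]. destruct (IHr r') as [b [Hb1 Hb2]].
      exists (NodeY a b). split; apply Rf_Y; auto.
Qed.

Theorem mainTheorem11 :
  forall T T' : tree, exists T'' : tree, refines T'' T /\ refines T'' T'.
Proof.
  intros T T'. destruct (common T T') as [u [H1 H2]]. exists u.
  split; intros x Hx; [apply (H1 0 0%nat x)|apply (H2 0 0%nat x)]; exact Hx.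
Qed.
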